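(* Let $\mathbf{A}\in\mathbb{R}^{p\times q}$ have full row rank, let $\mathbf{W}\in\mathbb{R}^{q\times q}$ be symmetric positive semidefinite (the neural tangent kernel of the network), let $\eta>0$, and let $\mathbf{x}\in\mathbb{R}^q$ be the ground truth image. Suppose the measurements are $\mathbf{y}=\mathbf{A}\mathbf{x}+\mathbf{n}$ with $\mathbf{n}\in\mathbb{R}^p$, $\mathbf{n}\sim\mathcal{N}(\mathbf{0},\sigma^2\mathbf{I})$. Define the iterates $$\mathbf{z}_{t+1}=\mathbf{z}_t+\eta\,\mathbf{W}\left(\mathbf{A}^T\mathbf{y}-\mathbf{A}^T\mathbf{A}\mathbf{z}_t\right),\qquad \mathbf{z}_0=\mathbf{0}.$$ Then the mean squared error $\mathrm{MSE}_t:=\mathbb{E}_{\mathbf{n}}\|\mathbf{z}_t-\mathbf{x}\|_2^2$ at iteration $t$ is $$\mathrm{MSE}_t=\left\|\left(\mathbf{I}-\eta\mathbf{W}\mathbf{A}^T\mathbf{A}\right)^t\mathbf{x}\right\|_2^2+\sigma^2\sum_{i=1}^p\nu_{t,i}^2,$$ where $\nu_{t,1},\dots,\nu_{t,p}$ are the singular values of the matrix $\left(\mathbf{I}-(\mathbf{I}-\eta\mathbf{W}\mathbf{A}^T\mathbf{A})^t\right)\mathbf{A}^{\dagger}$.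
   Context: $\mathbf{A}^\dagger$ denotes the Moore–Penrose pseudo-inverse of $\mathbf{A}$. The recursion models gradient-descent training of a deep image prior network with loss $\|\mathbf{A}f_\theta(\mathbf{z})-\mathbf{y}\|_2^2$ in the regime where the neural tangent kernel $\mathbf{W}$ stays fixed, with $\mathbf{z}_t$ the network output at iteration $t$. The MSE is decomposed as squared norm of the bias $\mathbb{E}_{\mathbf{n}}[\mathbf{z}_t]-\mathbf{x}$ plus the trace of the covariance of $\mathbf{z}_t$. *)

(* Defs.v *)
From HB Require Import structures.
From mathcomp Require Import all_boot all_order all_algebra.
From mathcomp Require Import all_classical all_reals all_analysis.
Set Implicit Arguments. Unset Strict Implicit. Unset Printing Implicit Defensive.
Import Order.TTheory GRing.Theory Num.Theory.
Local Open Scope classical_set_scope.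
Local Open Scope ring_scope.

Section Defs.
Variable R : realType.

Definition sqnorm (n : nat) (v : 'cV[R]_n) : R := \sum_(i < n) (v i 0) ^+ 2.

Definition is_pinv (m n : nat) (A : 'M[R]_(m, n)) (Ad : 'M[R]_(n, m)) : Prop :=
  [/\ A *m Ad *m A = A, Ad *m A *m Ad = Ad,
      (A *m Ad)^T = A *m Ad & (Ad *m A)^T = Ad *m A].

Definition is_psd (n : nat) (W : 'M[R]_n) : Prop :=
  W^T = W /\ forall v : 'cV[R]_n, 0 <= (v^T *m W *m v) 0 0.

(* nu lists the (n) singular values of B : 'M_(m, n) with multiplicity:
   nonnegative, and their squares are the eigenvalues of B^T B
   (with algebraic multiplicity). *)
Definition is_singular_values (m n : nat) (B : 'M[R]_(m, n)) (nu : 'I_n -> R)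
  : Prop :=
  (forall i, 0 <= nu i) /\
  char_poly (B^T *m B) = \prod_(i < n) ('X - ((nu i) ^+ 2)%:P).

Fixpoint dip_iter (p q : nat) (A : 'M[R]_(p, q)) (W : 'M[R]_q) (eta : R)
  (y : 'cV[R]_p) (t : nat) : 'cV[R]_q :=
  match t with
  | 0 => 0
  | t'.+1 => let z := dip_iter A W eta y t' in
             z + eta *: (W *m (A^T *m y - A^T *m A *m z))
  end.

(* Expectation of g(n1,...,nk) for n1,...,nk i.i.d. N(0, sigma^2),
   as an iterated integral against the normal law (sigma = std. dev.). *)
Fixpoint gaussE (sigma : R) (k : nat) (g : seq R -> R) : R :=
  match k with
  | 0 => g [::]
  | k'.+1 => Rintegral (normal_prob 0 sigma) setT
               (fun a : R => gaussE sigma k' (fun s => g (a :: s)))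
  end.

Definition vec_of_seq (p : nat) (s : seq R) : 'cV[R]_p := \col_(i < p) nth 0 s i.

Definition MSE (p q : nat) (A : 'M[R]_(p, q)) (W : 'M[R]_q) (eta sigma : R)
  (x : 'cV[R]_q) (t : nat) : R :=
  gaussE sigma p (fun s =>
    sqnorm (dip_iter A W eta (A *m x + vec_of_seq p s) t - x)).

End Defs.

(* Main.v *)
Require Import Defs.
From HB Require Import structures.
From mathcomp Require Import all_boot all_order all_algebra.
From mathcomp Require Import all_classical all_reals all_analysis.
From mathcomp Require Import measurable_realfun normal_distribution.
From mathcomp Require Import ring lra.
Set Implicit Arguments. Unset Strict Implicit. Unset Printing Implicit Defensive.
Import Order.TTheory GRing.Theory Num.Theory.
Import numFieldNormedType.Exports.
Local Open Scope classical_set_scope.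
Local Open Scope ring_scope.

Section G.
Variable R : realType.
Notation mu := (@lebesgue_measure R).
Local Open Scope ereal_scope.
Lemma normal_ge0_integral (m s : R) (f : R -> \bar R) : (forall x, 0 <= f x) ->
  measurable_fun [set: R] f ->
  \int[normal_prob m s]_x f x = \int[mu]_x (f x * (normal_pdf m s x)%:E).
Proof.
move=> f0 mf.
have nm : normal_prob m s `<< mu by exact: normal_prob_dominates.
rewrite -(Radon_Nikodym_SigmaFinite.change_of_variables nm) //.
apply: ae_eq_integral => //.
- apply: emeasurable_funM => //.
  exact: measurable_int (Radon_Nikodym_SigmaFinite.f_integrable _).
- apply: emeasurable_funM => //.
  by apply/measurable_EFinP; exact: measurable_normal_pdf.
- apply: ae_eqe_mul2l.
  apply: integral_ae_eq => //.
  + exact: Radon_Nikodym_SigmaFinite.f_integrable.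
  + by apply/measurable_EFinP; exact: measurable_normal_pdf.
  + move=> E _ mE.
    by rewrite -Radon_Nikodym_SigmaFinite.f_integral.
Qed.
Local Close Scope ereal_scope.
Variable s : R.
Hypothesis s0 : 0 < s.
Notation e := (normal_fun 0 s).

Lemma e_even x : e (- x) = e x.
Proof. by rewrite /normal_fun !subr0 sqrrN. Qed.

Lemma e_derive x : derivable e x 1 /\ (e^`())%classic x = - (x / s ^+ 2) * e x.
Proof.
pose h := (- (s ^+ 2 *+ 2)^-1) \*: (@id R ^+ 2).
have eE : e = expR \o h.
  apply/funext => y; rewrite /normal_fun /h /= subr0; congr expR.
  by rewrite exprfctE /= /GRing.scale /= mulrC mulNr mulrN.
have dh : is_derive x 1 h ((- (s ^+ 2 *+ 2)^-1) *: ((2%:R * x ^+ 1) *: 1)).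
  by apply: is_deriveZ; apply: is_deriveX.
have dh' : derivable h x 1 by case: dh.
have de : derivable expR (h x) 1 by case: (is_derive_expR (h x)).
rewrite eE; split.
  by apply/derivable1_diffP; apply: differentiable_comp; apply/derivable1_diffP.
rewrite derive1_comp // !derive1E !derive_val /=.
rewrite /h /= mulrC; congr (_ * _).
have s2 : s ^+ 2 != 0 by rewrite expf_neq0 // gt_eqF.
rewrite expr1 scaler1.
have sn : s != 0 by rewrite gt_eqF.
change (- (s ^+ 2 *+ 2)^-1 * (2 * x) = - (x / s ^+ 2)); by field.
Qed.


Lemma e_ge0 x : 0 <= e x. Proof. exact: normal_fun_ge0. Qed.

Lemma e_cont : continuous e.
Proof.
by move=> x; apply/differentiable_continuous/derivable1_diffP; exact: (e_derive x).1.
Qed.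

Lemma xe_le x : 0 < x -> x * e x <= (s ^+ 2 *+ 2) * x^-1.
Proof.
move=> x0.
have sn : s != 0 by rewrite gt_eqF.
have c0 : 0 < s ^+ 2 *+ 2 by rewrite pmulrn_lgt0 // exprn_gt0.
rewrite /normal_fun subr0 mulNr expRN.
set E := expR _.
have E0 : 0 < E by apply: expR_gt0.
rewrite -subr_ge0.
have -> : s ^+ 2 *+ 2 * x^-1 - x * E^-1 = ((s ^+ 2 *+ 2) * E - x * x) / (x * E).
  by field; rewrite gt_eqF // gt_eqF.
apply: divr_ge0; last by rewrite mulr_ge0 // ltW.
rewrite subr_ge0.
apply: (le_trans _ (ler_wpM2l (ltW c0) (expR_ge1Dx _))).
rewrite mulrDr mulr1 mulrCA mulfV ?gt_eqF // mulr1 -expr2 lerDr ltW //.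
Qed.

Lemma xe_cvg0 : (x * e x) @[x --> +oo] --> 0.
Proof.
have sn : s != 0 by rewrite gt_eqF.
have c0 : 0 < s ^+ 2 *+ 2 by rewrite pmulrn_lgt0 // exprn_gt0.
apply: (@squeeze_cvgr _ _ _ _ (cst 0) (fun x => (s ^+ 2 *+ 2) * x^-1)).
- near=> x.
  have x0 : 0 < x by near: x; apply: nbhs_pinfty_gt; rewrite num_real.
  by rewrite /= mulr_ge0 ?e_ge0 ?(ltW x0) //= xe_le.
- exact: cvg_cst.
- rewrite -[X in _ --> X](mulr0 (s ^+ 2 *+ 2)).
  apply: cvgM; first exact: cvg_cst.
  have := (@gtr0_cvgV0 _ _ _ _ (fun x : R => x) _).2.
  apply.
  + near=> x; near: x; apply: nbhs_pinfty_gt; exact: num_real.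
  + exact: cvg_id.
Unshelve. all: end_near. Qed.

Lemma me : measurable_fun [set: R] e. Proof. exact: measurable_normal_fun. Qed.

Lemma e_int_itv a b : mu.-integrable `[a, b] (EFin \o e).
Proof.
apply: continuous_compact_integrable; first exact: segment_compact.
by apply: continuous_subspaceT; exact: e_cont.
Qed.

Definition G (x : R) := \int[mu]_(t in `[0, x]) e t.

Lemma G_derive x : 0 < x -> derivable G x 1 /\ (G^`())%classic x = e x.
Proof.
move=> x0; apply: (@continuous_FTC1_closed R e 0 x (x + 1)) => //.
- by rewrite ltrDl.
- exact: e_int_itv.
- exact: e_cont.
Qed.

Lemma G_cont0 : G x @[x --> 0^'+] --> G 0.
Proof.
have := @parameterized_integral_continuous R 0 1 e ler01 (e_int_itv 0 1).
rewrite /parameterized_integral.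
by move/(continuous_within_itvP _ ltr01) => [_ h _]; exact: h.
Qed.

Lemma G0 : G 0 = 0.
Proof. by rewrite /G set_itv1 Rintegral_set1. Qed.

Lemma GE x : (G x)%:E = (\int[mu]_(t in `[0%R, x]) (e t)%:E)%E.
Proof. by rewrite /G /Rintegral fineK //; exact: integrable_fin_num (e_int_itv 0 x). Qed.

Definition L := (\int[mu]_(x in `[0%R, +oo[) (e x)%:E)%E.

Lemma G_le x y : x <= y -> G x <= G y.
Proof.
move=> xy; rewrite -lee_fin !GE; apply: ge0_subset_integral => //=.
- by apply/measurable_EFinP; exact: measurable_funS me.
- by move=> ? _; rewrite lee_fin e_ge0.
- exact: subset_itvl.
Qed.

Lemma G_leL x : ((G x)%:E <= L)%E.
Proof.
rewrite GE; apply: ge0_subset_integral => //=.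
- by apply/measurable_EFinP; exact: measurable_funS me.
- by move=> ? _; rewrite lee_fin e_ge0.
- by apply: subset_itvl; rewrite bnd_simp.
Qed.

Lemma pdfE x : normal_pdf 0 s x = normal_peak s * e x.
Proof. by rewrite /normal_pdf gt_eqF. Qed.

Lemma peak_gt0 : 0 < normal_peak s.
Proof. by apply: normal_peak_gt0; rewrite gt_eqF. Qed.

Lemma int_e : (\int[mu]_x (e x)%:E = ((normal_peak s)^-1)%:E)%E.
Proof.
have := integral_normal_pdf 0 s.
under eq_integral do rewrite pdfE EFinM.
rewrite ge0_integralZl_EFin //; [|by move=> x _; rewrite lee_fin e_ge0
  |by apply/measurable_EFinP; exact: me|exact: ltW peak_gt0].
move=> h.
rewrite -[LHS]mul1e -(@mulVf _ (normal_peak s)) ?gt_eqF ?peak_gt0 //.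
by rewrite EFinM -muleA h mule1.
Qed.

Lemma L_ge0 : (0 <= L)%E.
Proof. by apply: integral_ge0 => x _; rewrite lee_fin e_ge0. Qed.

Lemma L_fin : L \is a fin_num.
Proof.
rewrite ge0_fin_numE ?L_ge0 //.
apply: (@le_lt_trans _ _ (\int[mu]_x (e x)%:E)%E); last by rewrite int_e ltry.
apply: ge0_subset_integral => //=.
- by apply/measurable_EFinP; exact: me.
- by move=> ? _; rewrite lee_fin e_ge0.
Qed.

Lemma int_e_half : (\int[mu]_x (e x)%:E = 2%:E * L)%E.
Proof.
rewrite ge0_symfun_integralT //.
- rewrite /L (_ : [set x | _] = `[0%R, +oo[%classic) //.
  by apply/seteqP; split => x /=; rewrite in_itv /= andbT.
- exact: e_ge0.
- exact: e_cont.
- by move=> x /=; rewrite e_even.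
Qed.

Lemma G_cvg : G x @[x --> +oo] --> fine L.
Proof.
have ndG : nondecreasing_fun G by move=> x y; exact: G_le.
have ubG : has_ubound (range G).
  by exists (fine L) => _ [x _ <-]; rewrite -lee_fin (fineK L_fin) G_leL.
have h := nondecreasing_cvgr ndG ubG.
suff <- : sup (range G) = fine L by [].
have h1 := (cvg_pinftyP _ _).1 h _ cvgr_idn.
have h2 := @ge0_cvgn_integral R mu e e_ge0 me.
rewrite -/L -(fineK L_fin) in h2.
have h4 : G n%:R @[n --> \oo] --> fine L by exact: fine_cvg h2.
exact: (cvg_unique _ h1 h4).
Unshelve. all: end_near. Qed.

Lemma x2e_ge0 x : 0 <= x ^+ 2 * e x.
Proof. by rewrite mulr_ge0 ?sqr_ge0 ?e_ge0. Qed.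

Lemma x2e_cont : continuous (fun x : R => x ^+ 2 * e x).
Proof.
move=> x; apply: cvgM; last exact: e_cont.
exact: exprn_continuous.
Qed.

Lemma x2e_half :
  (\int[mu]_(x in `[0%R, +oo[) ((x ^+ 2 * e x)%:E) = (s ^+ 2 * fine L)%:E)%E.
Proof.
have sn : s != 0 by rewrite gt_eqF.
pose F := (s ^+ 2) \*: (G - (@id R * e)).
have dF x : 0 < x -> derivable F x 1.
  move=> x0; apply: derivableZ; apply: derivableB; first exact: (G_derive x0).1.
  by apply: derivableM; [exact: derivable_id|exact: (e_derive x).1].
have := @ge0_continuous_FTC2y R (fun x => x ^+ 2 * e x) F 0 (s ^+ 2 * fine L).
have F0 : F 0 = 0.
  by rewrite /F /= !fctE /= G0 mul0r subr0 scaler0.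
rewrite F0 sube0; apply.
- by move=> x _; exact: x2e_ge0.
- by apply: continuous_subspaceT; exact: x2e_cont.
- have -> : F = (fun x => s ^+ 2 * (G x - x * e x)).
    by apply/funext => y; rewrite /F /= !fctE.
  apply: cvgM; first exact: cvg_cst.
  rewrite -[fine L]subr0; exact: cvgB G_cvg xe_cvg0.
- exact: dF.
- have -> : F = (fun x => s ^+ 2 * (G x - x * e x)).
    by apply/funext => y; rewrite /F /= !fctE.
  have h : (fun x => s ^+ 2 * (G x - x * e x)) @ 0^'+ -->
      s ^+ 2 * (G 0 - 0 * e 0).
    apply: cvgM; first exact: cvg_cst.
    apply: cvgB; first exact: G_cont0.
    apply: cvg_at_right_filter; apply: cvgM; [exact: cvg_id|exact: e_cont].
  by rewrite G0 mul0r subr0 mulr0 in h.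
- move=> x; rewrite in_itv /= andbT => x0.
  rewrite derive1E deriveZ; last by apply: derivableB; [exact: (G_derive x0).1|
    apply: derivableM; [exact: derivable_id|exact: (e_derive x).1]].
  rewrite deriveB; [|exact: (G_derive x0).1|
    apply: derivableM; [exact: derivable_id|exact: (e_derive x).1]].
  rewrite deriveM; [|exact: derivable_id|exact: (e_derive x).1].
  rewrite derive_id -!derive1E (G_derive x0).2 (e_derive x).2.
  change (s ^+ 2 * (e x - (x * (- (x / s ^+ 2) * e x) + e x * 1)) = x ^+ 2 * e x).
  by field.
Qed.

Lemma int_x2pdf :
  (\int[mu]_x ((x ^+ 2 * normal_pdf 0 s x)%:E) = (s ^+ 2)%:E)%E.
Proof.
have hL : 2 * fine L = (normal_peak s)^-1.
  have := int_e_half; rewrite int_e -(fineK L_fin) -EFinM.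
  by move=> [->].
under eq_integral do rewrite pdfE mulrCA EFinM.
rewrite ge0_integralZl_EFin //; [|by move=> x _; rewrite lee_fin x2e_ge0
  |by apply/measurable_EFinP; apply: continuous_measurable_fun; exact: x2e_cont
  |exact: ltW peak_gt0].
rewrite ge0_symfun_integralT //; last 3 first.
- exact: x2e_ge0.
- exact: x2e_cont.
- by move=> x /=; rewrite e_even sqrrN.
rewrite (_ : [set x | _] = `[0%R, +oo[%classic); last first.
  by apply/seteqP; split => x /=; rewrite in_itv /= andbT.
rewrite x2e_half -!EFinM; congr EFin.
have -> : normal_peak s * (2 * (s ^+ 2 * fine L)) =
    s ^+ 2 * (normal_peak s * (2 * fine L)) by ring.
by rewrite hL mulfV ?gt_eqF ?peak_gt0 // mulr1.
Qed.

Local Open Scope ereal_scope.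
Lemma reflectE (f : R -> \bar R) : (forall x, 0 <= f x) ->
  measurable_fun [set: R] f ->
  \int[mu]_x f (- x)%R = \int[mu]_x f x.
Proof.
move=> f0 mf.
transitivity (\int[mu]_(x in (-%R : _ -> measurableTypeR R) @^-1` setT) f (- x)%R).
  by rewrite preimage_setT.
rewrite -ge0_integral_pushforward //=.
by apply: eq_measure_integral => //= A mA _; exact: lebesgue_measureN.
Qed.

Notation nu := (normal_prob 0 s).

Lemma nu_x2 : \int[nu]_x ((x ^+ 2)%:E) = (s ^+ 2)%:E.
Proof.
rewrite normal_ge0_integral //; last 2 first.
- by move=> x; rewrite lee_fin sqr_ge0.
- by apply/measurable_EFinP; exact: measurable_funX.
rewrite -int_x2pdf; apply: eq_integral => x _; by rewrite EFinM.
Qed.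

Lemma nu_int_x2 : nu.-integrable setT (fun x => (x ^+ 2)%:E).
Proof.
apply/integrableP; split.
  by apply/measurable_EFinP; exact: measurable_funX.
under eq_integral do rewrite gee0_abs ?lee_fin ?sqr_ge0 //.
by rewrite nu_x2 ltry.
Qed.

Lemma nu_int_1 : nu.-integrable setT (fun x => (1%R)%:E).
Proof. exact: (finite_measure_integrable_cst _ 1%R). Qed.

Lemma nu_int_x : nu.-integrable setT (fun x => x%:E).
Proof.
apply: (@le_integrable _ _ _ nu setT measurableT _ (fun x => (1 + x ^+ 2)%R%:E)).
- by apply/measurable_EFinP.
- move=> x _; rewrite !abse_EFin lee_fin [`|(1 + _)%R|%R]ger0_norm ?addr_ge0 ?sqr_ge0 //.
  have [x1|x1] := leP `|x|%R 1%R; first by rewrite (le_trans x1) // lerDl sqr_ge0.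
  rewrite -real_normK ?num_real //.
  move: x1; set y := `|x|%R => x1; nra.
- rewrite (_ : (fun x => (1 + x ^+ 2)%R%:E) = ((fun x => (1%R)%:E) \+ (fun x => (x ^+ 2)%:E))).
    exact: integrableD nu_int_1 nu_int_x2.
  by apply/funext => y; rewrite /= EFinD.
Qed.

Lemma pdf_even x : normal_pdf 0 s (- x)%R = normal_pdf 0 s x.
Proof. by rewrite !pdfE e_even. Qed.

Lemma nu_x : \int[nu]_x (x%:E) = 0.
Proof.
rewrite integralE.
have fp : \int[nu]_x ((fun y : R => y%:E)^\+ x) \is a fin_num.
  exact: (integrable_fin_num measurableT (integrable_funepos measurableT nu_int_x)).
suff -> : \int[nu]_x ((fun y : R => y%:E)^\- x) =
          \int[nu]_x ((fun y : R => y%:E)^\+ x) by rewrite subee.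
rewrite !normal_ge0_integral //; last 2 first.
- by apply: measurable_funepos; exact/measurable_EFinP.
- by apply: measurable_funeneg; exact/measurable_EFinP.
rewrite -reflectE; last 2 first.
- by move=> x; rewrite mule_ge0 ?funeneg_ge0 // lee_fin normal_pdf_ge0.
- apply: emeasurable_funM; first by apply: measurable_funeneg; exact/measurable_EFinP.
  by apply/measurable_EFinP; exact: measurable_normal_pdf.
apply: eq_integral => x _; rewrite pdf_even; congr (_ * _).
rewrite funenegE funeposE /=; congr (maxe _ _); congr EFin; exact: opprK.
Qed.

Lemma nu_quad (a b c : R) :
  (\int[nu]_(x in setT) (a + b * x + c * x ^+ 2))%R = (a + c * s ^+ 2)%R.
Proof.
have ix : nu.-integrable setT (EFin \o (fun x : R => b * x)%R).
  rewrite (_ : EFin \o _ = (fun x => b%:E * x%:E)); last first.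
    by apply/funext => y; rewrite /= EFinM.
  exact: (integrableZl measurableT b nu_int_x).
have ix2 : nu.-integrable setT (EFin \o (fun x : R => c * x ^+ 2)%R).
  rewrite (_ : EFin \o _ = (fun x => c%:E * (x ^+ 2)%:E)); last first.
    by apply/funext => y; rewrite /= EFinM.
  exact: (integrableZl measurableT c nu_int_x2).
have i1 : nu.-integrable setT (EFin \o (fun x : R => a)).
  exact: finite_measure_integrable_cst.
rewrite RintegralD //; last first.
  rewrite (_ : EFin \o _ = (EFin \o (fun x => a)) \+ (EFin \o (fun x => b * x)%R)).
    exact: integrableD i1 ix.
  by apply/funext => y; rewrite /= EFinD.
rewrite RintegralD // Rintegral_cst //.
rewrite (_ : fine (nu _) = 1%R); last by rewrite probability_setT.
rewrite /= mulr1.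
rewrite RintegralZl //; last exact: nu_int_x.
rewrite RintegralZl //; last exact: nu_int_x2.
by rewrite /Rintegral nu_x nu_x2 /= mulr0 addr0.
Qed.
Local Close Scope ereal_scope.
End G.

Section GE.
Variable R : realType.
Variable s : R.
Hypothesis s0 : 0 < s.

Lemma gaussE_ext k (g1 g2 : seq R -> R) : g1 =1 g2 -> gaussE s k g1 = gaussE s k g2.
Proof. by move=> /funext ->. Qed.

Lemma gaussE_quad (k : nat) (c : R) (b : nat -> R) (Q : nat -> nat -> R) :
  gaussE s k (fun l => c + \sum_(j < k) b j * nth 0 l j +
     \sum_(j < k) \sum_(i < k) Q j i * (nth 0 l j * nth 0 l i)) =
  c + s ^+ 2 * \sum_(j < k) Q j j.
Proof.
elim: k c b Q => [|k IH] c b Q /=.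
  by rewrite !big_ord0 !addr0 mulr0 addr0.
have -> : (fun a => gaussE s k (fun l => c + \sum_(j < k.+1) b j * nth 0 (a :: l) j +
     \sum_(j < k.+1) \sum_(i < k.+1) Q j i * (nth 0 (a :: l) j * nth 0 (a :: l) i))) =
  (fun a => (c + s ^+ 2 * \sum_(j < k) Q j.+1 j.+1) + b 0%N * a + Q 0%N 0%N * a ^+ 2).
  apply/funext => a.
  transitivity ((c + b 0%N * a + Q 0%N 0%N * a ^+ 2) + s ^+ 2 * \sum_(j < k) Q j.+1 j.+1); last by ring.
  rewrite (@gaussE_ext k _ (fun l => (c + b 0%N * a + Q 0%N 0%N * a ^+ 2) +
     \sum_(j < k) (b j.+1 + (Q 0%N j.+1 + Q j.+1 0%N) * a) * nth 0 l j +
     \sum_(j < k) \sum_(i < k) Q j.+1 i.+1 * (nth 0 l j * nth 0 l i))).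
    exact: (IH _ (fun j => b j.+1 + (Q 0%N j.+1 + Q j.+1 0%N) * a) (fun j i => Q j.+1 i.+1)).
  move=> l.
  rewrite !big_ord_recl /=.
  have h1 : \sum_(i < k) b (bump 0 i) * l`_(0 + i) = \sum_(i < k) b i.+1 * l`_i.
    by apply: eq_bigr.
  have h2 : \sum_(i < k) Q 0%N (bump 0 i) * (a * l`_(0 + i)) =
            \sum_(i < k) Q 0%N i.+1 * (a * l`_i) by apply: eq_bigr.
  have h3 : \sum_(i < k) \sum_(i0 < k.+1) Q (bump 0 i) i0 * (l`_(0 + i) * (a :: l)`_i0) =
     \sum_(i < k) Q i.+1 0%N * (l`_i * a) +
     \sum_(j < k) \sum_(i < k) Q j.+1 i.+1 * (l`_j * l`_i).
    rewrite -big_split; apply: eq_bigr => i _ /=.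
    by rewrite big_ord_recl /=.
  have h4 : \sum_(j < k) (b j.+1 + (Q 0%N j.+1 + Q j.+1 0%N) * a) * l`_j =
     \sum_(j < k) b j.+1 * l`_j + \sum_(j < k) Q 0%N j.+1 * (a * l`_j) +
     \sum_(j < k) Q j.+1 0%N * (l`_j * a).
    by rewrite -!big_split; apply: eq_bigr => j _ /=; ring.
  rewrite h1 h2 h3 h4; ring.
rewrite (nu_quad s0) big_ord_recl /=; ring.
Qed.
End GE.

Section LA.
Variable R : realType.
Variables (p q : nat) (A : 'M[R]_(p, q)) (W : 'M[R]_q) (eta : R) (Ad : 'M[R]_(q, p)).
Hypothesis rkA : \rank A = p.
Hypothesis AAdA : A *m Ad *m A = A.

Lemma AAd : A *m Ad = 1%:M.
Proof.
have rf : row_free A by rewrite /row_free rkA.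
apply: (row_free_inj rf) => /=.
by rewrite AAdA mul1mx.
Qed.

Let N := eta *: (W *m A^T *m A).
Let M := 1%:M - N.

Lemma NAdA : N *m Ad *m A = N.
Proof. by rewrite /N -!scalemxAl -!mulmxA (mulmxA A) AAdA. Qed.

Lemma BA t : (1%:M - M ^+ t) *m Ad *m A = 1%:M - M ^+ t.
Proof.
elim: t => [|t IH]; first by rewrite expr0 subrr !mul0mx.
have -> : 1%:M - M ^+ t.+1 = (1%:M - M ^+ t) + M ^+ t *m N.
  by rewrite exprSr /M -mulmxE mulmxBr mulmx1 opprB addrCA addrC.
by rewrite mulmxDl mulmxDl IH -!mulmxA (mulmxA N) NAdA.
Qed.

Lemma dipE t y : dip_iter A W eta y t = (1%:M - M ^+ t) *m Ad *m y.
Proof.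
elim: t => [|t IH] /=; first by rewrite expr0 subrr !mul0mx.
rewrite IH.
set P := M ^+ t.
have hy : A^T *m y = A^T *m A *m (Ad *m y) by rewrite -!mulmxA (mulmxA A) AAd mul1mx.
rewrite hy -!mulmxA -mulmxBr.
set v := Ad *m y.
rewrite (mulmxBl 1%:M P v) mul1mx -mulmxBr (_ : v - (v - P *m v) = P *m v); last by rewrite opprB addrC subrK.
have -> : 1%:M - M ^+ t.+1 = (1%:M - P) + N *m P.
  by rewrite exprS /M -mulmxE mulmxBl mul1mx opprB addrCA addrC.
by rewrite mulmxDl /N -!scalemxAl -!mulmxA mulmxBl mul1mx.
Qed.
End LA.

Section Q.
Variable R : realType.

Lemma sqnorm_affine q p (u : 'cV[R]_q) (B : 'M[R]_(q, p)) (l : seq R) :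
  sqnorm (u + B *m vec_of_seq p l) =
  sqnorm u + \sum_(j < p) (\sum_(i < q) 2 * u i 0 * B i j) * nth 0 l j +
  \sum_(j < p) \sum_(k < p) (\sum_(i < q) B i j * B i k) * (nth 0 l j * nth 0 l k).
Proof.
rewrite /sqnorm.
have e i : ((u + B *m vec_of_seq p l) i 0) ^+ 2 = u i 0 ^+ 2 +
   \sum_(j < p) 2 * u i 0 * B i j * nth 0 l j +
   \sum_(j < p) \sum_(k < p) B i j * B i k * (nth 0 l j * nth 0 l k).
  rewrite !mxE.
  under eq_bigr do rewrite mxE.
  set S := (\sum_(j < p) B i j * nth 0 l j).
  have -> : (u i 0 + S) ^+ 2 = u i 0 ^+ 2 + 2 * u i 0 * S + S * S by ring.
  rewrite mulr_sumr mulr_suml.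
  congr (_ + _ + _); apply: eq_bigr => j _.
    by ring.
  rewrite mulr_sumr; apply: eq_bigr => k _; ring.
under eq_bigr do rewrite e.
rewrite !big_split /=; congr (_ + _ + _).
  rewrite exchange_big; apply: eq_bigr => j _; rewrite mulr_suml.
  by apply: eq_bigr => i _.
rewrite exchange_big; apply: eq_bigr => j _.
rewrite exchange_big; apply: eq_bigr => k _; rewrite mulr_suml.
by apply: eq_bigr => i _.
Qed.

Lemma sv_sum q p (B : 'M[R]_(q, p)) (nu : 'I_p -> R) :
  is_singular_values B nu ->
  \sum_(j < p) \sum_(i < q) B i j * B i j = \sum_(j < p) nu j ^+ 2.
Proof.
move=> [_ hc].
have -> : \sum_(j < p) \sum_(i < q) B i j * B i j = \tr (B^T *m B).
  by rewrite /mxtrace; apply: eq_bigr => j _; rewrite mxE; apply: eq_bigr => i _; rewrite mxE.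
case: p B nu hc => [|p] B nu hc; first by rewrite /mxtrace !big_ord0.
apply: oppr_inj; rewrite -char_poly_trace // hc.
set ps := [seq nu i ^+ 2 | i <- index_enum 'I_p.+1].
have -> : \prod_(i < p.+1) ('X - (nu i ^+ 2)%:P) = \prod_(x <- ps) ('X - x%:P).
  by rewrite big_map.
have sz : size ps = p.+1 by rewrite size_map /index_enum unlock -enumT size_enum_ord.
by rewrite -{1}sz coefPn_prod_XsubC ?sz // big_map.
Qed.

Definition extn p (f : 'I_p -> R) (j : nat) : R :=
  if insub j is Some o then f o else 0.

Lemma extnE p (f : 'I_p -> R) (o : 'I_p) : extn f o = f o.
Proof. by rewrite /extn valK. Qed.

Definition extn2 p (f : 'I_p -> 'I_p -> R) (j i : nat) : R :=
  if insub j is Some o then extn (f o) i else 0.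

Lemma extn2E p (f : 'I_p -> 'I_p -> R) (o o' : 'I_p) : extn2 f o o' = f o o'.
Proof. by rewrite /extn2 valK extnE. Qed.

End Q.

Unset Implicit Arguments.
Local Close Scope classical_set_scope.

Theorem theorem2 (R : realType) (p q : nat) (A : 'M[R]_(p, q)) (W : 'M[R]_q)
  (eta sigma : R) (x : 'cV[R]_q) (Ad : 'M[R]_(q, p)) (t : nat) (nu : 'I_p -> R) :
  \rank A = p ->
  is_psd W ->
  0 < eta ->
  0 < sigma ->
  is_pinv A Ad ->
  is_singular_values
    ((1%:M - (1%:M - eta *: (W *m A^T *m A)) ^+ t) *m Ad) nu ->
  MSE A W eta sigma x t =
    sqnorm ((1%:M - eta *: (W *m A^T *m A)) ^+ t *m x)
    + sigma ^+ 2 * \sum_(i < p) (nu i) ^+ 2.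
Proof.
move=> rkA _ _ sig0 [AAdA _ _ _] hsv.
rewrite /MSE.
set P := (1%:M - eta *: (W *m A^T *m A)) ^+ t.
set B := (1%:M - P) *m Ad.
set u := - (P *m x).
pose b := extn (fun j : 'I_p => \sum_(i < q) 2 * u i 0 * B i j).
pose Q := extn2 (fun j k : 'I_p => \sum_(i < q) B i j * B i k).
rewrite (@gaussE_ext R sigma p _ (fun l => sqnorm u + \sum_(j < p) b j * nth 0 l j +
     \sum_(j < p) \sum_(i < p) Q j i * (nth 0 l j * nth 0 l i))).
  rewrite (gaussE_quad sig0).
  have -> : sqnorm u = sqnorm (P *m x).
    by rewrite /sqnorm; apply: eq_bigr => i _; rewrite /u mxE sqrrN.
  congr (_ + _ * _).
  rewrite -(sv_sum hsv); apply: eq_bigr => j _.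
  by rewrite /Q extn2E.
move=> l.
rewrite (dipE W eta rkA AAdA) -/P -/B.
rewrite mulmxDr mulmxA (BA W eta AAdA) -/P mulmxBl mul1mx.
have -> : x - P *m x + B *m vec_of_seq p l - x = u + B *m vec_of_seq p l.
  by rewrite /u addrAC (addrAC x) subrr add0r.
rewrite sqnorm_affine.
congr (_ + _ + _).
  by apply: eq_bigr => j _; rewrite /b extnE.
apply: eq_bigr => j _; apply: eq_bigr => k _.
by rewrite /Q extn2E.
Qed.
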